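(* Let $(X,\Sigma,\mu)$ be a semi-finite measure space, and let $E$ be the ideal in $\mathrm{L}^0(X,\Sigma,\mu)$ consisting of (equivalence classes of) measurable functions with $\sigma$-finite supports. Let $A$ be a subset of $E$. Then $A$ is closed in $E$ with respect to the topology of local convergence in measure if and only if $A$ contains the almost everywhere limits (in $E$) of all sequences in $A$.
   Context: $\mathrm{L}^0(X,\Sigma,\mu)$ is the vector lattice of measurable real functions modulo $\mu$-a.e. equality. A measure space is semi-finite if every set of infinite measure contains a measurable subset of finite positive measure. A net $(f_\alpha)$ converges locally in measure to $f$ if $\mu(\{t\in B: |f_\alpha(t)-f(t)|\geq\varepsilon\})\to0$ for every $\varepsilon>0$ and every $B\in\Sigma$ with $\mu(B)<\infty$. *)

(* Defs.v *)
From HB Require Import structures.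
From mathcomp Require Import all_boot all_order all_algebra.
From mathcomp Require Import all_classical all_reals all_analysis.

Set Implicit Arguments.
Unset Strict Implicit.
Unset Printing Implicit Defensive.
Import Order.TTheory GRing.Theory Num.Theory.
Local Open Scope classical_set_scope.
Local Open Scope ring_scope.

Section Defs.
Context (d : measure_display) (T : measurableType d) (R : realType).
Variable mu : {measure set T -> \bar R}.

Definition semi_finite : Prop :=
  forall A : set T, measurable A -> mu A = +oo%E ->
    exists2 B : set T, measurable B /\ B `<=` A & (0 < mu B < +oo)%E.

Definition sigma_finite_support (f : T -> R) : Prop :=
  exists F : nat -> set T,
    (forall n, measurable (F n) /\ (mu (F n) < +oo)%E) /\
    [set t | f t != 0] `<=` \bigcup_n F n.

(** Representatives of elements of the ideal E of L^0. *)
Definition Eset : set (T -> R) :=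
  [set f | measurable_fun setT f /\ sigma_finite_support f].

(** A set of representatives is a.e.-saturated, i.e. it is the full
    preimage of a subset of the quotient L^0 (restricted to measurable
    functions). *)
Definition ae_saturated (A : set (T -> R)) : Prop :=
  forall f g : T -> R, A f -> measurable_fun setT g ->
    {ae mu, forall t, f t = g t} -> A g.

Definition directed (I : Type) (le : I -> I -> Prop) : Prop :=
  [/\ inhabited I, (forall i, le i i),
      (forall i j k, le i j -> le j k -> le i k) &
      (forall i j, exists k, le i k /\ le j k)].

Definition cvg_loc_meas (I : Type) (le : I -> I -> Prop)
    (f : I -> T -> R) (g : T -> R) : Prop :=
  forall (eps : R) (B : set T), 0 < eps -> measurable B -> (mu B < +oo)%E ->
    forall delta : R, 0 < delta ->
      exists i0 : I, forall i, le i0 i ->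
        (mu [set t | B t /\ (eps <= `|f i t - g t|)%R] < delta%:E)%E.

Definition closed_loc_meas (A : set (T -> R)) : Prop :=
  forall (I : Type) (le : I -> I -> Prop), directed le ->
    forall (f : I -> T -> R) (g : T -> R),
      (forall i, A (f i)) -> Eset g -> cvg_loc_meas le f g -> A g.

End Defs.

(* Main.v *)
Require Import Defs.
From HB Require Import structures.
From mathcomp Require Import all_boot all_order all_algebra.
From mathcomp Require Import all_classical all_reals all_analysis.
From mathcomp Require Import measurable_realfun.
Import Order.TTheory GRing.Theory Num.Theory numFieldNormedType.Exports.
Local Open Scope classical_set_scope.
Local Open Scope ring_scope.

Section S.
Context (d : measure_display) (T : measurableType d) (R : realType).
Variable mu : {measure set T -> \bar R}.

Lemma mset_ge (h : T -> R) (e : R) : measurable_fun setT h ->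
  measurable [set t | e <= `|h t|].
Proof.
move=> mh.
have := measurableT_comp (@normr_measurable R setT) mh.
move=> /(_ measurableT `[e, +oo[%classic (measurable_itv _)).
rewrite setTI.
suff -> : [set t | e <= `|h t|] = (Num.norm \o h) @^-1` `[e, +oo[%classic by [].
by apply/seteqP; split => t /=; rewrite in_itv/= andbT.
Qed.

Lemma ae_loc (f : nat -> T -> R) (g : T -> R) :
  (forall n, measurable_fun setT (f n)) -> measurable_fun setT g ->
  {ae mu, forall t, f n t @[n --> \oo] --> g t} ->
  cvg_loc_meas mu (fun a b => (a <= b)%N) f g.
Proof.
move=> mf mg ae eps B eps0 mB Bfin delta delta0.
have [B' [mB' B'd Hu]] := @ae_pointwise_almost_uniform _ _ _ mu f g B delta
  (fun n => measurable_funS measurableT (@subsetT _ B) (mf n))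
  (measurable_funS measurableT (@subsetT _ B) mg) mB Bfin
  (filterS (fun t Ht _ => Ht) ae) delta0.
have Pnb : nbhs (g : {uniform` (B `\` B') -> R})
   [set h | forall y, (B `\` B') y -> ball (g y) eps (h y)].
  apply/uniform_nbhs; exists [set xy : R * R | ball xy.1 (PosNum eps0)%:num xy.2].
  by split; [exact: entourage_ball | move=> h /= Hh].
have [N _ HN] := Hu _ Pnb.
exists N => n /HN /= Hn.
rewrite (le_lt_trans _ B'd)//; apply: le_measure; rewrite ?inE.
- apply: measurableI => //; apply: mset_ge; exact: measurable_funB.
- by [].
move=> t [Bt et]; apply: contrapT => nB'.
have := Hn t (conj Bt nB'); rewrite /ball /= distrC.
by rewrite ltNge et.
Qed.

Fixpoint Ufin (F : nat -> set T) (k : nat) : set T :=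
  if k is k'.+1 then Ufin F k' `|` F k' else set0.

Lemma Ufin_prop F k : (forall m, measurable (F m) /\ (mu (F m) < +oo)%E) ->
  measurable (Ufin F k) /\ (mu (Ufin F k) < +oo)%E.
Proof.
move=> HF; elim: k => [|k [mk fk]] /=; first by rewrite measure0.
have [mF fF] := HF k.
split; first exact: measurableU.
exact: (le_lt_trans (measureU2 _ _ _) (lte_add_pinfty fk fF)).
Qed.

Lemma Ufin_sub F k m : (m < k)%N -> F m `<=` Ufin F k.
Proof.
elim: k => // k IH; rewrite ltnS leq_eqVlt => /orP[/eqP ->|/IH H] /=.
  by move=> t Ft; right.
by move=> t /H Ht; left.
Qed.

Section Bw.
Variables (I : Type) (Cg : nat -> set T) (Cf : I -> nat -> set T)
  (pick : set T -> nat -> I).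

Definition Bk (D : nat -> set T) k := Ufin (fun m => Cg m `|` D m) k.

Fixpoint st k : nat -> set T :=
  match k with 0 => fun _ => set0
  | k'.+1 => fun m => st k' m `|` Cf (pick (Bk (st k') k') k') m end.

Definition sq k := pick (Bk (st k) k) k.

Hypothesis HCg : forall m, measurable (Cg m) /\ (mu (Cg m) < +oo)%E.
Hypothesis HCf : forall i m, measurable (Cf i m) /\ (mu (Cf i m) < +oo)%E.

Lemma st_prop k m : measurable (st k m) /\ (mu (st k m) < +oo)%E.
Proof.
elim: k m => [|k IH] m /=; first by rewrite measure0.
have [mk fk] := IH m; have [mF fF] := HCf (pick (Bk (st k) k) k) m.
split; first exact: measurableU.
exact: (le_lt_trans (measureU2 _ _ _) (lte_add_pinfty fk fF)).
Qed.

Lemma Bk_prop k : measurable (Bk (st k) k) /\ (mu (Bk (st k) k) < +oo)%E.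
Proof.
apply: Ufin_prop => m; have [m1 f1] := HCg m; have [m2 f2] := st_prop k m.
split; first exact: measurableU.
exact: (le_lt_trans (measureU2 _ _ _) (lte_add_pinfty f1 f2)).
Qed.

Lemma st_mono j k m : (j <= k)%N -> st j m `<=` st k m.
Proof.
elim: k => [|k IH]; first by rewrite leqn0 => /eqP ->.
rewrite leq_eqVlt => /orP[/eqP ->//|]; rewrite ltnS => /IH H t /H Ht /=.
by left.
Qed.

Lemma Cf_sub j m k : (j < k)%N -> Cf (sq j) m `<=` st k m.
Proof.
move=> jk t Ht; apply: (@st_mono j.+1 k m jk) => /=; by right.
Qed.

Lemma Cg_subB m k : (m < k)%N -> Cg m `<=` Bk (st k) k.
Proof. by move=> mk t Ht; apply: (Ufin_sub _ _ _ mk); left. Qed.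

Lemma st_subB m k : (m < k)%N -> st k m `<=` Bk (st k) k.
Proof. by move=> mk t Ht; apply: (Ufin_sub _ _ _ mk); right. Qed.

End Bw.
Arguments st {I}. Arguments sq {I}. Arguments Bk_prop {I Cg Cf pick}.
Arguments Cg_subB {I Cg Cf pick m k}. Arguments st_subB {I Cg Cf pick m k}.
Arguments Cf_sub {I Cg Cf pick j m k}.

Lemma cvg_from_bound (u : nat -> R) (l : R) K :
  (forall k, (K <= k)%N -> `|u k - l| < k.+1%:R^-1) -> u n @[n --> \oo] --> l.
Proof.
move=> H; apply/cvgrPdist_lt => e e0.
near=> k.
rewrite distrC; apply: (lt_trans (H k _)).
  near: k; by exists K.
near: k; exact: (near_infty_natSinv_lt (PosNum e0)).
Unshelve. all: by end_near.
Qed.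


Lemma loc_seq (I : Type) (le : I -> I -> Prop) (f : I -> T -> R) (g : T -> R) :
  directed le -> (forall i, Eset mu (f i)) -> Eset mu g -> cvg_loc_meas mu le f g ->
  exists s : nat -> I, {ae mu, forall t, f (s n) t @[n --> \oo] --> g t}.
Proof.
case=> [[i0] lrefl _ _] Ef [mg [Cg [HCg sg]]] Hc.
have [Cf HCf'] := choice (fun i => proj2 (Ef i)).
have HCf i m := (HCf' i).1 m.
pose bad (i : I) (k : nat) := [set t | k.+1%:R^-1 <= `|f i t - g t|].
pose P (S : set T) k i := (mu (S `&` bad i k) < (1 / (2 ^ k.+1)%:R)%:E)%E.
pose pick S k : I := match pselect (exists i, P S k i) with
  left h => proj1_sig (cid h) | right _ => i0 end.
have pickP S k : (exists i, P S k i) -> P S k (pick S k).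
  by rewrite /pick; case: pselect => // h _; case: cid.
pose s := sq Cg Cf pick.
exists s.
pose S k := Bk Cg (st Cg Cf pick k) k `&` bad (s k) k.
have mbad i k : measurable (bad i k).
  apply: (mset_ge (fun t => f i t - g t)); apply: measurable_funB => //; exact: (Ef i).1.
have mS k : measurable (S k).
  apply: measurableI; [exact: (Bk_prop HCg HCf k).1 | exact: mbad].
have muS k : (mu (S k) < (1 / (2 ^ k.+1)%:R)%:E)%E.
  apply: pickP.
  have [mB fB] := @Bk_prop I Cg Cf pick HCg HCf k.
  have e0 : 0 < k.+1%:R^-1 :> R by rewrite invr_gt0 ltr0Sn.
  have d0 : 0 < 1 / (2 ^ k.+1)%:R :> R by rewrite divr_gt0 // ltr0n expn_gt0.
  have [j Hj] := Hc k.+1%:R^-1 _ e0 mB fB _ d0.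
  by exists j; exact: Hj j (lrefl j).
have N0 : mu (lim_sup_set S) = 0%E.
  apply: lim_sup_set_cvg0 => //.
  apply: (le_lt_trans (lee_nneseries (v := fun k => (1 / (2^k.+1)%:R)%:E) _ _)).
  - by move=> i _ _; exact: measure_ge0.
  - by move=> i _; exact/ltW.
  exact: (le_lt_trans (epsilon_trick0 xpredT ler01)) (ltry _).
exists (lim_sup_set S); split.
- apply: bigcapT_measurable => n; apply: bigcup_measurable => j _; exact: mS.
- exact: N0.
move=> t /= nconv; apply: contrapT => nN; apply: nconv.
have [n Hn] : exists n, forall j, (n <= j)%N -> ~ S j t.
  apply: contrapT => H; apply: nN => n _; apply: contrapT => H2; apply: H.
  by exists n => j nj Sj; apply: H2; exists j.
have [K HK] : exists K, forall k, (K <= k)%N -> `|f (s k) t - g t| < k.+1%:R^-1.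
  have [[m Cm]|nCg] := pselect (exists m, Cg m t).
    exists (maxn n m.+1) => k; rewrite geq_max => /andP[nk mk].
    rewrite ltNge; apply/negP => bk; apply: (Hn k nk); split => //.
    exact: (Cg_subB mk _ Cm).
  have [[j [m Cjm]]|nCf] := pselect (exists j m, Cf (s j) m t).
    exists (maxn n (maxn j m).+1) => k; rewrite geq_max => /andP[nk].
    rewrite gtn_max => /andP[jk mk].
    rewrite ltNge; apply/negP => bk; apply: (Hn k nk); split => //.
    exact: (st_subB mk _ (Cf_sub jk _ Cjm)).
  exists 0%N => k _.
  have g0 : g t = 0.
    apply: contrapT => H; have H' : g t != 0 by apply/eqP.
    have [m _ Cm] := sg t H'; apply: nCg; by exists m.
  have f0 : f (s k) t = 0.
    apply: contrapT => H; have H' : f (s k) t != 0 by apply/eqP.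
    have [m _ Cm] := (HCf' (s k)).2 t H'; apply: nCf; by exists k, m.
  by rewrite f0 g0 subrr normr0 invr_gt0 ltr0Sn.
exact: cvg_from_bound HK.
Qed.

End S.

Theorem corollary5p17 (d : measure_display) (T : measurableType d)
    (R : realType) (mu : {measure set T -> \bar R}) (A : set (T -> R)) :
  semi_finite mu -> A `<=` Eset mu -> ae_saturated mu A ->
  (closed_loc_meas mu A <->
   forall (f : nat -> T -> R) (g : T -> R),
     (forall n, A (f n)) -> Eset mu g ->
     {ae mu, forall t, f n t @[n --> \oo] --> g t} -> A g).
Proof.
move=> _ AE _; split.
- move=> Hcl f g fA Eg ae.
  apply: (Hcl nat (fun a b => (a <= b)%N) _ f g fA Eg).
    split; [exact: (inhabits 0%N) | by [] | move=> i j k; exact: leq_trans |].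
    by move=> i j; exists (maxn i j); rewrite leq_maxl leq_maxr.
  apply: (@ae_loc _ _ _ mu) => //; [move=> n; exact: (AE _ (fA n)).1 | exact: Eg.1].
- move=> Hs I le dir f g fA Eg Hc.
  have [s Hsae] := @loc_seq _ _ _ mu _ _ _ _ dir (fun i => AE _ (fA i)) Eg Hc.
  exact: (Hs (fun n => f (s n)) g (fun n => fA (s n)) Eg Hsae).
Qed.
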